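(* For every $d \in \{2,3,4,5,8,12,16\}$, there are at most finitely many positive integers $n$ for which $\left\lfloor n^2/d \right\rfloor$ is prime. *)

(* Defs.v *)
From mathcomp Require Import all_boot.

(* Main.v *)
Require Import Defs.
From mathcomp Require Import all_boot.
From mathcomp Require Import zify.

Lemma key n d a b s : 0 < d -> n ^ 2 = a * b * d + s -> s < d -> 1 < a -> 1 < b ->
  ~~ prime (n ^ 2 %/ d).
Proof.
move=> d0 E sd a1 b1; rewrite E divnMDl // divn_small // addn0.
apply/negP => /primeP [_ H].
have := H a (dvdn_mulr _ (dvdnn a)); case/orP => /eqP h; first lia.
have : a * 1 < a * b by rewrite ltn_pmul2l; lia.
lia.
Qed.

Lemma gen d m : 0 < m ->
  (forall k r, r < m -> 1 < k -> ~~ prime ((k * m + r) ^ 2 %/ d)) ->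
  exists N : nat, forall n : nat, 0 < n -> prime (n ^ 2 %/ d) -> n <= N.
Proof.
move=> m0 F; exists (2 * m) => n _ P.
rewrite leqNgt; apply/negP => Hn.
have E := divn_eq n m.
have Hr : n %% m < m by rewrite ltn_mod.
have Hk : 1 < n %/ m.
  rewrite leq_divRL //; lia.
by move: (F _ _ Hr Hk); rewrite -E P.
Qed.

Ltac fin x y z := apply: (@key _ _ x y z); lia.

Theorem theorem1 (d : nat) (hd : d \in [:: 2; 3; 4; 5; 8; 12; 16]) :
  exists N : nat, forall n : nat, 0 < n -> prime (n ^ 2 %/ d) -> n <= N.
Proof.
move: hd; rewrite !inE => /or4P [/eqP->|/eqP->|/eqP->|/or4P [/eqP->|/eqP->|/eqP->|/eqP->]].
- apply: (@gen _ 2) => // k r Hr Hk.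
  case: r Hr => [|[|r]] Hr; [fin (2*k) k 0 | fin (2*k) (k+1) 1 | lia].
- apply: (@gen _ 3) => // k r Hr Hk.
  case: r Hr => [|[|[|r]]] Hr;
    [fin (3*k) k 0 | fin k (3*k+2) 1 | fin (3*k+1) (k+1) 1 | lia].
- apply: (@gen _ 2) => // k r Hr Hk.
  case: r Hr => [|[|r]] Hr; [fin k k 0 | fin k (k+1) 1 | lia].
- apply: (@gen _ 5) => // k r Hr Hk.
  case: r Hr => [|[|[|[|[|r]]]]] Hr;
    [fin (5*k) k 0 | fin k (5*k+2) 1 | fin k (5*k+4) 4
    | fin (5*k+1) (k+1) 4 | fin (5*k+3) (k+1) 1 | lia].
- apply: (@gen _ 4) => // k r Hr Hk.
  case: r Hr => [|[|[|[|r]]]] Hr;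
    [fin (2*k) k 0 | fin k (2*k+1) 1 | fin (2*k) (k+1) 4
    | fin (2*k+1) (k+1) 1 | lia].
- apply: (@gen _ 6) => // k r Hr Hk.
  case: r Hr => [|[|[|[|[|[|r]]]]]] Hr;
    [fin (3*k) k 0 | fin k (3*k+1) 1 | fin k (3*k+2) 4 | fin (3*k) (k+1) 9
    | fin (3*k+1) (k+1) 4 | fin (3*k+2) (k+1) 1 | lia].
- apply: (@gen _ 8) => // k r Hr Hk.
  case: r Hr => [|[|[|[|[|[|[|[|r]]]]]]]] Hr;
    [fin (4*k) k 0 | fin k (4*k+1) 1 | fin k (4*k+2) 4 | fin k (4*k+3) 9
    | fin (2*k+1) (2*k+1) 0 | fin (4*k+1) (k+1) 9 | fin (4*k+2) (k+1) 4
    | fin (4*k+3) (k+1) 1 | lia].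
Qed.
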